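(* Let $\mathbb K$ be a field with $2\in\mathbb K^\times$, $A$ a unital commutative associative $\mathbb K$-algebra with unit $\mathbf 1$, $\mathfrak k$ a $\mathbb K$-Lie algebra, $\mathfrak g=A\otimes\mathfrak k$, and $\mathfrak z$ a $\mathbb K$-vector space. Let $f_1:\Lambda^2(A)\otimes S^2(\mathfrak k)\to\mathfrak z$, $f_2:A\otimes\Lambda^2(\mathfrak k)\to\mathfrak z$, $f_3:I_A\otimes\Lambda^2(\mathfrak k)\to\mathfrak z$ be linear. Then $f=f_1\circ p_1+f_2\circ p_2+f_3\circ p_3:\Lambda^2(\mathfrak g)\to\mathfrak z$ is a 2-cocycle if and only if: (a) $\tilde f_1(a,b)$ is an invariant symmetric bilinear map for all $a,b\in A$; (b) for every $t\in T_0(A)$, $\tilde f_1(t)(x,y)=0$ for all $x\in\mathfrak k$, $y\in\mathfrak k'$; (c) $d_{\mathfrak k}(\tilde f_2(a))=\Gamma(\tilde f_1(a,\mathbf 1))$ for every $a\in A$; (d) for every $c\in I_A$, $\tilde f_3(c)(x,y)=0$ for all $x\in\mathfrak k$, $y\in\mathfrak k'$.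
   Context: $\mathfrak g$ has bracket $[a\otimes x,a'\otimes x']=aa'\otimes[x,x']$; write $ax=a\otimes x$; $\mathfrak k'=[\mathfrak k,\mathfrak k]$. $\Lambda^2(V)$, $S^2(V)$ are identified with antisymmetric/symmetric tensors via $v\wedge w=\tfrac12(v\otimes w-w\otimes v)$, $v\vee w=\tfrac12(v\otimes w+w\otimes v)$. $I_A\subseteq S^2(A)$ is the kernel of the multiplication map $S^2(A)\to A$. The linear maps $p_1(ax\wedge by)=a\wedge b\otimes x\vee y\in\Lambda^2(A)\otimes S^2(\mathfrak k)$, $p_2(ax\wedge by)=ab\otimes x\wedge y\in A\otimes\Lambda^2(\mathfrak k)$, $p_3(ax\wedge by)=(a\vee b-ab\vee\mathbf 1)\otimes x\wedge y\in I_A\otimes\Lambda^2(\mathfrak k)$ together give a linear isomorphism of $\Lambda^2(\mathfrak g)$ onto the direct sum of the three spaces. A 2-cocycle is a linear map $f:\Lambda^2(\mathfrak g)\to\mathfrak z$ vanishing on $B_2(\mathfrak g)=\mathrm{im}\,\partial$, where $\partial(u\wedge v\wedge w)=[u,v]\wedge w+[v,w]\wedge u+[w,u]\wedge v$. Set $\tilde f_1(a,b)(x,y):=f_1(a\wedge b\otimes x\vee y)$ (extended linearly to $\Lambda^2(A)$), $\tilde f_2(a)(x,y):=f_2(a\otimes x\wedge y)$, $\tilde f_3(c)(x,y):=f_3(c\otimes x\wedge y)$. A symmetric bilinear $\kappa:\mathfrak k\times\mathfrak k\to\mathfrak z$ is invariant if $\kappa([x,y],z)=\kappa(x,[y,z])$;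 for such $\kappa$, $\Gamma(\kappa)(x,y,z):=\kappa([x,y],z)$. $T_0(A)\subseteq\Lambda^2(A)$ is the span of $ab\wedge c+bc\wedge a+ca\wedge b-abc\wedge\mathbf 1$, $a,b,c\in A$. For alternating bilinear $\eta:\mathfrak k\times\mathfrak k\to\mathfrak z$, $(d_{\mathfrak k}\eta)(x,y,z)=-\eta([x,y],z)+\eta([x,z],y)-\eta([y,z],x)$. *)

(* Defs.v *)
From HB Require Import structures.
From mathcomp Require Import all_boot all_order all_algebra.
Set Implicit Arguments. Unset Strict Implicit. Unset Printing Implicit Defensive.
Import GRing.Theory.
Local Open Scope ring_scope.

Section Defs.
Variables (K : fieldType).

Definition lie_bracket (k : lmodType K) (br : k -> k -> k) : Prop :=
  [/\ forall (c : K) (x x' y : k), br (c *: x + x') y = c *: br x y + br x' y,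
      forall (c : K) (x y y' : k), br x (c *: y + y') = c *: br x y + br x y',
      forall x : k, br x x = 0
    & forall x y w : k, br x (br y w) + br y (br w x) + br w (br x y) = 0].

Definition in_derived (k : lmodType K) (br : k -> k -> k) (y : k) : Prop :=
  exists n (l : 'I_n -> K) (u v : 'I_n -> k), y = \sum_(i < n) l i *: br (u i) (v i).

Definition bilinear_map (k z : lmodType K) (b : k -> k -> z) : Prop :=
  (forall (c : K) x x' y, b (c *: x + x') y = c *: b x y + b x' y) /\
  (forall (c : K) x y y', b x (c *: y + y') = c *: b x y + b x y').

Definition inv_sym_bilinear (k z : lmodType K) (br : k -> k -> k)
    (kappa : k -> k -> z) : Prop :=
  [/\ bilinear_map kappa,
      forall x y, kappa x y = kappa y x
    & forall x y w, kappa (br x y) w = kappa x (br y w)].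

Definition Gamma (k z : lmodType K) (br : k -> k -> k) (kappa : k -> k -> z) :
  k -> k -> k -> z := fun x y w => kappa (br x y) w.

Definition dk (k z : lmodType K) (br : k -> k -> k) (eta : k -> k -> z) :
  k -> k -> k -> z :=
  fun x y w => - eta (br x y) w + eta (br x w) y - eta (br y w) x.

Definition multilinear4 (V1 V2 V3 V4 z : lmodType K) (F : V1 -> V2 -> V3 -> V4 -> z) :
  Prop :=
  [/\ forall (c : K) a a' b x y, F (c *: a + a') b x y = c *: F a b x y + F a' b x y,
      forall (c : K) a b b' x y, F a (c *: b + b') x y = c *: F a b x y + F a b' x y,
      forall (c : K) a b x x' y, F a b (c *: x + x') y = c *: F a b x y + F a b x' y
    & forall (c : K) a b x y y', F a b x (c *: y + y') = c *: F a b x y + F a b x y'].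

Definition multilinear3 (V1 V2 V3 z : lmodType K) (F : V1 -> V2 -> V3 -> z) : Prop :=
  [/\ forall (c : K) a a' x y, F (c *: a + a') x y = c *: F a x y + F a' x y,
      forall (c : K) a x x' y, F a (c *: x + x') y = c *: F a x y + F a x' y
    & forall (c : K) a x y y', F a x (c *: y + y') = c *: F a x y + F a x y'].

Variables (A : comAlgType K) (k z : lmodType K) (br : k -> k -> k).

(* Encodings (by the universal properties) of the linear maps
   f1 : Lambda^2(A) (x) S^2(k) -> z   as F1 a b x y = f1(a/\b (x) x\/y),
   f2 : A (x) Lambda^2(k) -> z        as F2 a x y   = f2(a (x) x/\y),
   f3 : S^2(A) (x) Lambda^2(k) -> z   as F3 a b x y = f3(a\/b (x) x/\y). *)
Definition f1_map (F1 : A -> A -> k -> k -> z) : Prop :=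
  [/\ multilinear4 F1, forall a x y, F1 a a x y = 0
    & forall a b x y, F1 a b x y = F1 a b y x].

Definition f2_map (F2 : A -> k -> k -> z) : Prop :=
  multilinear3 F2 /\ forall a x, F2 a x x = 0.

Definition f3_map (F3 : A -> A -> k -> k -> z) : Prop :=
  [/\ multilinear4 F3, forall a b x y, F3 a b x y = F3 b a x y
    & forall a b x, F3 a b x x = 0].

(* f = f1 o p1 + f2 o p2 + f3 o p3, evaluated on the generator ax /\ by of Lambda^2(g). *)
Definition f_of (F1 : A -> A -> k -> k -> z) (F2 : A -> k -> k -> z)
    (F3 : A -> A -> k -> k -> z) (a : A) (x : k) (b : A) (y : k) : z :=
  F1 a b x y + F2 (a * b) x y + (F3 a b x y - F3 (a * b) 1 x y).

(* f vanishes on B_2(g) = im d, where Lambda^3(g) is spanned by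
   ax /\ by /\ cw and [ax,by] = ab[x,y]. *)
Definition is_2cocycle (f : A -> k -> A -> k -> z) : Prop :=
  forall (a b c : A) (x y w : k),
    f (a * b) (br x y) c w + f (b * c) (br y w) a x + f (c * a) (br w x) b y = 0.

End Defs.

(* Main.v *)
Require Import Defs.
From HB Require Import structures.
From mathcomp Require Import all_boot all_order all_algebra.
From Stdlib Require Import FunctionalExtensionality.
Set Implicit Arguments. Unset Strict Implicit.
Import GRing.Theory.
Local Open Scope ring_scope.

Ltac zfin := apply/eqP; rewrite -subr_eq0 !opprD !opprK !addrA.
Lemma idA (V : zmodType) (P Q S1 T1 S2 T2 U : V) : P - Q + (P - Q) = (P + S1 + T1 + (- Q + S2 + T2) + U) - (- P + S1 + T1 + (Q + S2 + T2) + U).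
Proof. zfin; by rewrite (ACl (((((((((1*5)*(3*12))*(8*2))*(13*6))*(14*7))*(15*4))*(16*9))*(17*10))*(18*11))) /= !subrr !addr0. Qed.
Lemma idC (V : zmodType) (K A1 A2 A3 : V) : K + A1 + A2 + A3 = K + A1 + (- K + A2) + (K + A3).
Proof. zfin; by rewrite (ACl (((((1*5)*(2*6))*(3*8))*(4*10))*(7*9))) /= !subrr !addr0. Qed.
Lemma idC2 (V : zmodType) (K A1 A2 A3 : V) : -A1 + -A3 - A2 - K = -(K + A1 + A2 + A3).
Proof. zfin; by rewrite (ACl ((((5*4)*(6*1))*(7*3))*(8*2))) /= !subrr !addr0. Qed.
Lemma idD (V : zmodType) (Q S1 T1 S2 T2 U1 U2 : V) : T1 + T2 = (Q + S1 + T1 + (- Q + S2 + T2) + (U1 + U2)) - (U1 + S1 + S2 + U2).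
Proof. zfin; by rewrite (ACl (((((((1*5)*(2*8))*(6*3))*(11*9))*(12*4))*(13*7))*(14*10))) /= !subrr !addr0. Qed.
Lemma idB (V : zmodType) (K S1 S2 S3 P1 P2 P3 : V) : P1 + P2 + P3 - K = (P1 + S1 + (P2 + S2) + (P3 + S3)) - (K + S1 + S2 + S3).
Proof. zfin; by rewrite (ACl (((((((1*5)*(2*7))*(3*9))*(11*4))*(12*6))*(13*8))*(14*10))) /= !subrr !addr0. Qed.
Lemma idG (V : zmodType) (g1 g2 g3 : V) : g1 + g1 = (g1 + g2) - (g2 + g3) + (g3 + g1).
Proof. zfin; by rewrite (ACl ((((1*3)*(2*8))*(5*4))*(6*7))) /= !subrr !addr0. Qed.

Lemma shapeA (V : zmodType) (P Q S1 T1 S2 T2 U : V) :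
  P + S1 + T1 + (- Q + S2 + T2) + U = 0 -> - P + S1 + T1 + (Q + S2 + T2) + U = 0 ->
  P - Q + (P - Q) = 0.
Proof. by move=> h1 h2; rewrite (@idA _ P Q S1 T1 S2 T2 U) h1 h2 subrr. Qed.
Lemma shapeC (V : zmodType) (K A1 A2 A3 : V) :
  K + A1 + (- K + A2) + (K + A3) = 0 -> K + A1 + A2 + A3 = 0.
Proof. by move=> h; rewrite idC. Qed.
Lemma shapeD (V : zmodType) (Q S1 T1 S2 T2 U1 U2 : V) :
  Q + S1 + T1 + (- Q + S2 + T2) + (U1 + U2) = 0 -> U1 + S1 + S2 + U2 = 0 -> T1 + T2 = 0.
Proof. by move=> h1 h2; rewrite (@idD _ Q S1 T1 S2 T2 U1 U2) h1 h2 subrr. Qed.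
Lemma shapeBf (V : zmodType) (K S1 S2 S3 P1 P2 P3 : V) :
  K + S1 + S2 + S3 = 0 -> P1 + S1 + (P2 + S2) + (P3 + S3) = 0 -> P1 + P2 + P3 - K = 0.
Proof. by move=> h1 h2; rewrite (@idB _ K S1 S2 S3 P1 P2 P3) h2 h1 subrr. Qed.
Lemma shapeBb (V : zmodType) (K S1 S2 S3 P1 P2 P3 : V) :
  K + S1 + S2 + S3 = 0 -> P1 + P2 + P3 - K = 0 -> P1 + S1 + (P2 + S2) + (P3 + S3) = 0.
Proof. by move=> h1 h2; rewrite -[LHS]subr0 -{1}h1 -(@idB _ K S1 S2 S3 P1 P2 P3) h2. Qed.

Section Lin.
Variable K : fieldType.
Definition islin (V W : lmodType K) (g : V -> W) :=
  forall (c : K) u u', g (c *: u + u') = c *: g u + g u'.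

Lemma lin0 (V W : lmodType K) (g : V -> W) : islin g -> g 0 = 0.
Proof.
move=> h; have := h 1 0 0; rewrite !scale1r addr0 => e.
by apply: (@addrI _ (g 0)); rewrite addr0 -e.
Qed.
Lemma linD (V W : lmodType K) (g : V -> W) : islin g -> forall u v, g (u + v) = g u + g v.
Proof. by move=> h u v; rewrite -{1}[u]scale1r h scale1r. Qed.
Lemma linZ (V W : lmodType K) (g : V -> W) : islin g -> forall c u, g (c *: u) = c *: g u.
Proof. by move=> h c u; rewrite -[c *: u]addr0 h (lin0 h) addr0. Qed.
Lemma linN (V W : lmodType K) (g : V -> W) : islin g -> forall u, g (- u) = - g u.
Proof. by move=> h u; rewrite -scaleN1r (linZ h) scaleN1r. Qed.
Lemma linsum (V W : lmodType K) (g : V -> W) : islin g -> forall n (F : 'I_n -> V),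
  g (\sum_(i < n) F i) = \sum_(i < n) g (F i).
Proof. by move=> h n F; apply: (big_morph g (linD h) (lin0 h)). Qed.
Lemma islinD (V W : lmodType K) (g1 g2 : V -> W) :
  islin g1 -> islin g2 -> islin (fun u => g1 u + g2 u).
Proof. by move=> h1 h2 c u u'; rewrite h1 h2 scalerDr addrACA. Qed.
Lemma islinB (V W : lmodType K) (g1 g2 : V -> W) :
  islin g1 -> islin g2 -> islin (fun u => g1 u - g2 u).
Proof. by move=> h1 h2 c u u'; rewrite h1 h2 scalerBr opprD addrACA. Qed.

Lemma derived0 (k z : lmodType K) (br : k -> k -> k) (g : k -> z) y :
  islin g -> (forall u v, g (br u v) = 0) -> in_derived br y -> g y = 0.
Proof.
move=> hg h0 [n [l [u [v ->]]]]; rewrite (linsum hg); apply: big1 => i _.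
by rewrite (linZ hg) h0 scaler0.
Qed.

Lemma derived0' (k z : lmodType K) (br : k -> k -> k) (g : k -> z) :
  islin g -> (forall u v, g (br u v) = 0) -> forall y, in_derived br y -> g y = 0.
Proof. by move=> h1 h2 y hy; apply: derived0 hy. Qed.

Lemma twice0 (V : lmodType K) : (2 : K) != 0 -> forall v : V, v + v = 0 -> v = 0.
Proof.
move=> h2 v hv; rewrite -[v]scale1r -(mulVf h2) -scalerA.
by rewrite scaler_nat (mulr2n v) hv scaler0.
Qed.

Lemma scal0_of (V : lmodType K) (c : K) (v : V) : v = 0 -> c *: v = 0.
Proof. by move=> ->; rewrite scaler0. Qed.
End Lin.

Lemma anti_of (V W : zmodType) (B : V -> V -> W) :
  (forall x y w, B (x + y) w = B x w + B y w) ->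
  (forall x y w, B w (x + y) = B w x + B w y) -> (forall x, B x x = 0) ->
  forall x y, B y x = - B x y.
Proof.
move=> D1 D2 B0 x y; have := B0 (x + y); rewrite D1 !D2 !B0 add0r addr0.
by move/eqP; rewrite addr_eq0 => /eqP ->; rewrite opprK.
Qed.

Theorem theorem3p1 (K : fieldType) (two_unit : (2 : K) != 0)
    (A : comAlgType K) (k z : lmodType K) (br : k -> k -> k)
    (Hlie : lie_bracket br)
    (F1 : A -> A -> k -> k -> z) (F2 : A -> k -> k -> z) (F3 : A -> A -> k -> k -> z)
    (HF1 : f1_map F1) (HF2 : f2_map F2) (HF3 : f3_map F3) :
  is_2cocycle br (f_of F1 F2 F3) <->
  [/\ (* (a) *)
      forall a b : A, inv_sym_bilinear br (F1 a b),
      (* (b): for t = sum_i l_i (a_i b_i /\ c_i + b_i c_i /\ a_i + c_i a_i /\ b_i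
                                - a_i b_i c_i /\ 1) in T_0(A) *)
      forall (n : nat) (l : 'I_n -> K) (a b c : 'I_n -> A) (x y : k),
        in_derived br y ->
        \sum_(i < n) l i *: (F1 (a i * b i) (c i) x y + F1 (b i * c i) (a i) x y
                             + F1 (c i * a i) (b i) x y - F1 (a i * b i * c i) 1 x y) = 0,
      (* (c) *)
      forall a : A, dk br (F2 a) = Gamma br (F1 a 1)
    & (* (d): for c = sum_i l_i (a_i \/ b_i) with sum_i l_i a_i b_i = 0, i.e. c in I_A *)
      forall (n : nat) (l : 'I_n -> K) (a b : 'I_n -> A) (x y : k),
        \sum_(i < n) l i *: (a i * b i) = 0 ->
        in_derived br y ->
        \sum_(i < n) l i *: F3 (a i) (b i) x y = 0].
Proof.
case: Hlie => brL brR brxx _.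
case: HF1 => [[F1a F1b F1c F1d] F1aa F1sym].
case: HF2 => [[F2a F2b F2c] F2xx].
case: HF3 => [[F3a F3b F3c F3d] F3sym F3xx].
have brs1 : forall y, islin (fun u => br u y) := fun y c u u' => brL c u u' y.
have brs2 : forall x, islin (br x) := fun x c u u' => brR c x u u'.
have F1s1 : forall b x y, islin (fun u => F1 u b x y) := fun b x y c u u' => F1a c u u' b x y.
have F1s2 : forall a x y, islin (fun u => F1 a u x y) := fun a x y c u u' => F1b c a u u' x y.
have F1s3 : forall a b y, islin (fun u => F1 a b u y) := fun a b y c u u' => F1c c a b u u' y.
have F1s4 : forall a b x, islin (F1 a b x) := fun a b x c u u' => F1d c a b x u u'.
have F2s2 : forall a y, islin (fun u => F2 a u y) := fun a y c u u' => F2b c a u u' y.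
have F2s3 : forall a x, islin (F2 a x) := fun a x c u u' => F2c c a x u u'.
have F3s1 : forall b x y, islin (fun u => F3 u b x y) := fun b x y c u u' => F3a c u u' b x y.
have F3s3 : forall a b y, islin (fun u => F3 a b u y) := fun a b y c u u' => F3c c a b u u' y.
have F3s4 : forall a b x, islin (F3 a b x) := fun a b x c u u' => F3d c a b x u u'.
have brAnti : forall x y, br y x = - br x y.
  apply: anti_of => //.
  - by move=> x y w; apply: (linD (brs1 w)).
  - by move=> x y w; apply: (linD (brs2 w)).
have F1anti : forall a b x y, F1 b a x y = - F1 a b x y.
  move=> a b x y; apply: (anti_of (B := fun a b => F1 a b x y)) => //.
  - by move=> p q r; apply: (linD (F1s1 r x y)).
  - by move=> p q r; apply: (linD (F1s2 r x y)).
have F3anti : forall a b x y, F3 a b y x = - F3 a b x y.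
  move=> a b x y; apply: (anti_of (B := fun x y => F3 a b x y)) => //.
  - by move=> p q r; apply: (linD (F3s3 a b r)).
  - by move=> p q r; apply: (linD (F3s4 a b r)).
have F2N2 : forall a u y, F2 a (- u) y = - F2 a u y.
  by move=> a u y; apply: (linN (F2s2 a y)).
have Ccyc_dk : forall a x y w,
    (F1 a 1 (br x y) w + F2 a (br x y) w + F2 a (br y w) x + F2 a (br w x) y = 0) <->
    dk br (F2 a) x y w = Gamma br (F1 a 1) x y w.
  move=> a x y w; rewrite /dk /Gamma (brAnti w x) F2N2; split.
  - by move=> h; apply/eqP; rewrite -subr_eq0 idC2 h oppr0.
  - by move=> h; apply/eqP; rewrite -oppr_eq0 -idC2 h subrr.
rewrite /is_2cocycle /f_of; split.
- move=> H.
  have inv : forall a c x y w, F1 a c (br x y) w = F1 a c (br y w) x.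
    move=> a c x y w.
    have h1 := H a 1 c x y w; have h2 := H c 1 a x y w.
    rewrite !mulr1 !mul1r [c * a]mulrC !(F3sym c a) !(F1anti a c) in h1.
    rewrite !mulr1 !mul1r [c * a]mulrC !(F3sym c a) !(F1anti a c) in h2.
    by apply/eqP; rewrite -subr_eq0; apply/eqP; apply: (twice0 two_unit); apply: shapeA h1 h2.
  have Ccyc : forall a x y w,
      F1 a 1 (br x y) w + F2 a (br x y) w + F2 a (br y w) x + F2 a (br w x) y = 0.
    move=> a x y w; have h := H a 1 1 x y w.
    rewrite !mulr1 !mul1r !(F3sym 1 a) !subrr !addr0 !(F1anti a 1) in h.
    rewrite -(inv a 1 x y w) (inv a 1 w x y) in h.
    exact: shapeC h.
  have Dz0 : forall a c x y w,
      (F3 a c (br x y) w - F3 (a * c) 1 (br x y) w)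
      + (F3 a c (br y w) x - F3 (a * c) 1 (br y w) x) = 0.
    move=> a c x y w; have h := H a 1 c x y w.
    rewrite !mulr1 !mul1r [c * a]mulrC !(F3sym c a) !(F1anti a c) in h.
    rewrite (inv a c x y w) subrr addr0 (inv (a * c) 1 w x y) in h.
    exact: shapeD h (Ccyc (a * c) x y w).
  have Dz : forall p q u v s,
      F3 p q (br u v) s - F3 (p * q) 1 (br u v) s = 0.
    move=> p q u v s; apply: (twice0 two_unit).
    rewrite (idG (F3 p q (br u v) s - F3 (p*q) 1 (br u v) s) (F3 p q (br v s) u - F3 (p*q) 1 (br v s) u) (F3 p q (br s u) v - F3 (p*q) 1 (br s u) v)).
    by rewrite (Dz0 p q u v s) (Dz0 p q v s u) (Dz0 p q s u v) subrr add0r.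
  have Bk : forall a b c x y w,
      F1 (a * b) c (br x y) w + F1 (b * c) a (br x y) w + F1 (c * a) b (br x y) w
      - F1 (a * b * c) 1 (br x y) w = 0.
    move=> a b c x y w; have h := H a b c x y w.
    have e1 : b * c * a = a * b * c by rewrite mulrC mulrA.
    have e2 : c * a * b = a * b * c by rewrite -mulrA mulrC.
    rewrite !Dz !addr0 e1 e2 -(inv (b * c) a x y w) (inv (c * a) b w x y) in h.
    exact: shapeBf (Ccyc (a * b * c) x y w) h.
  split.
  + move=> a b; split.
    * by split=> c u u' v; [exact: (F1c c a b u u' v) | exact: (F1d c a b u u' v)].
    * by move=> x y; apply: F1sym.
    * by move=> x y w; rewrite (inv a b x y w) (F1sym a b (br y w) x).
  + move=> n l a b c x y Hy; apply: big1 => i _; apply: scal0_of.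
    move: (y) Hy; apply: derived0'.
    * by apply: islinB; [apply: islinD; [apply: islinD|]|]; apply: F1s4.
    * move=> u v /=; rewrite !(F1sym _ _ x (br u v)); exact: Bk.
  + move=> a; apply: functional_extensionality => x.
    apply: functional_extensionality => y; apply: functional_extensionality => w.
    by apply/Ccyc_dk; apply: Ccyc.
  + move=> n l a b x y hab Hy.
    have e : forall i, F3 (a i) (b i) x y = F3 (a i * b i) 1 x y.
      move=> i; apply/eqP; rewrite -subr_eq0; apply/eqP.
      move: (y) Hy; apply: derived0'.
      * by apply: islinB; apply: F3s4.
      * move=> u v /=; rewrite (F3anti (a i) (b i) (br u v) x).
        by rewrite (F3anti (a i * b i) 1 (br u v) x) -opprD Dz oppr0.
    transitivity (F3 (\sum_(i < n) l i *: (a i * b i)) 1 x y); last first.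
      by rewrite hab (lin0 (F3s1 1 x y)).
    rewrite (linsum (F3s1 1 x y)); apply: eq_bigr => i _ /=.
    by rewrite e (linZ (F3s1 1 x y)).
- case=> Ha Hb Hc Hd a b c x y w.
  have inv : forall p q x y w, F1 p q (br x y) w = F1 p q (br y w) x.
    move=> p q x' y' w'; case: (Ha p q) => _ Hs Hi.
    by rewrite Hi Hs.
  have Ccyc : forall a x y w,
      F1 a 1 (br x y) w + F2 a (br x y) w + F2 a (br y w) x + F2 a (br w x) y = 0.
    by move=> a' x' y' w'; apply/Ccyc_dk; rewrite Hc.
  have Dz : forall p q u v s,
      F3 p q (br u v) s - F3 (p * q) 1 (br u v) s = 0.
    move=> p q u v s.
    have := Hd 2 (fun i => if val i == 0%N then 1 else -1)
      (fun i => if val i == 0%N then p else p * q)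
      (fun i => if val i == 0%N then q else 1) s (br u v).
    rewrite !big_ord_recl !big_ord0 /= !addr0 scale1r scaleN1r mulr1 subrr.
    have Hd1 : in_derived br (br u v).
      by exists 1%N, (fun _ => 1), (fun _ => u), (fun _ => v); rewrite big_ord1 scale1r.
    move=> /(_ erefl Hd1).
    rewrite scale1r scaleN1r (F3anti p q (br u v) s) (F3anti (p * q) 1 (br u v) s).
    by rewrite -opprD => /eqP; rewrite oppr_eq0 => /eqP.
  have Bk : forall a b c x y w,
      F1 (a * b) c (br x y) w + F1 (b * c) a (br x y) w + F1 (c * a) b (br x y) w
      - F1 (a * b * c) 1 (br x y) w = 0.
    move=> a' b' c' x' y' w'.
    have Hd1 : in_derived br (br x' y').
      by exists 1%N, (fun _ => 1), (fun _ => x'), (fun _ => y'); rewrite big_ord1 scale1r.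
    have := Hb 1%N (fun _ => 1) (fun _ => a') (fun _ => b') (fun _ => c') w' _ Hd1.
    by rewrite big_ord1 scale1r !(F1sym _ _ w' (br x' y')).
  have e1 : b * c * a = a * b * c by rewrite mulrC mulrA.
  have e2 : c * a * b = a * b * c by rewrite -mulrA mulrC.
  rewrite !Dz !addr0 e1 e2 -(inv (b * c) a x y w) (inv (c * a) b w x y).
  exact: shapeBb (Ccyc (a * b * c) x y w) (Bk a b c x y w).
Qed.
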